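(* Let $\mathcal F$ be a proper filter on $\omega$. The games $\mathfrak G_1(\mathcal F)$ and $\mathfrak G(\mathrm{Fr},[\omega]^{<\omega},\mathcal F)$ are equivalent: a player has a winning strategy in one game if and only if the same player has a winning strategy in the other. Consequently, in either game, player I has a winning strategy if and only if $\mathcal F$ is meager, and player II never has a winning strategy.
   Context: A filter on $\omega$ is a family $\mathcal F\subseteq\mathcal P(\omega)$ closed under finite intersections and supersets and containing all cofinite sets; it is proper if all its members are infinite. $\mathcal P(\omega)$ is identified with $2^\omega$ with the product topology; ''meager'' refers to this topology. $\mathrm{Fr}$ is the family of cofinite subsets of $\omega$. Game $\mathfrak G(\mathcal X,[\omega]^{<\omega},\mathcal Z)$: at each stage $k\in\omega$, player I chooses $X_k\in\mathcal X$ and player II responds with a nonempty finite set $s_k\subseteq X_k$; II wins if $\bigcup_k s_k\in\mathcal Z$, otherwise I wins. Game $\mathfrak G_1(\mathcal F)$: at each stage $k$, player I chooses $m_k\in\omega$ and player II responds with $n_k\in\omega$; II wins if $n_0<n_1<\cdots$, $m_k<n_k$ for infinitely many $k$, and $\{n_k:k\in\omega\}\in\mathcal F$; otherwise I wins. *)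

(* Defs.v *)
(* Subsets of omega are predicates nat -> Prop;
   P(omega) = 2^omega is the space of such predicates (bit i of X is "X i"). *)
From Stdlib Require Import List Arith.
Import ListNotations.

Definition subset_w := nat -> Prop.

Definition cofinite (X : subset_w) : Prop := exists N, forall n, N <= n -> X n.
Definition infinite_set (X : subset_w) : Prop := forall N, exists n, N <= n /\ X n.

Definition is_filter (F : subset_w -> Prop) : Prop :=
  (forall X, cofinite X -> F X) /\
  (forall X Y, F X -> F Y -> F (fun n => X n /\ Y n)) /\
  (forall X Y, F X -> (forall n, X n -> Y n) -> F Y).

Definition proper_filter (F : subset_w -> Prop) : Prop :=
  is_filter F /\ (forall X, F X -> infinite_set X).

(* Topology of 2^omega: basic clopen set determined by a finite initial segment. *)
Definition cyl (s : list bool) (X : subset_w) : Prop :=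
  forall i, i < length s -> (X i <-> nth i s false = true).

Definition nowhere_dense (A : subset_w -> Prop) : Prop :=
  forall s : list bool, exists t : list bool,
    forall X, cyl (s ++ t) X -> ~ A X.

Definition meager (A : subset_w -> Prop) : Prop :=
  exists N : nat -> (subset_w -> Prop),
    (forall k, nowhere_dense (N k)) /\ (forall X, A X -> exists k, N k X).

Definition hist {A : Type} (x : nat -> A) (k : nat) : list A := map x (seq 0 k).

(* Finite sets chosen by II are represented by lists of naturals. *)
Definition legal_finite (s : list nat) (X : subset_w) : Prop :=
  s <> [] /\ forall n, In n s -> X n.

Definition union_of (s : nat -> list nat) : subset_w := fun n => exists k, In n (s k).

(* Strategy of I: from the previous moves of II, a cofinite set. *)
Definition I_wins_G (F : subset_w -> Prop) : Prop :=
  exists sigma : list (list nat) -> subset_w,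
    (forall h, cofinite (sigma h)) /\
    forall s : nat -> list nat,
      (forall k, legal_finite (s k) (sigma (hist s k))) ->
      ~ F (union_of s).

(* Strategy of II: from the previous moves of I and I's current move, a finite set. *)
Definition II_wins_G (F : subset_w -> Prop) : Prop :=
  exists tau : list subset_w -> subset_w -> list nat,
    (forall h X, cofinite X -> legal_finite (tau h X) X) /\
    forall Xs : nat -> subset_w,
      (forall k, cofinite (Xs k)) ->
      F (union_of (fun k => tau (hist Xs k) (Xs k))).

Definition II_wins_play_G1 (F : subset_w -> Prop) (m n : nat -> nat) : Prop :=
  (forall k, n k < n (S k)) /\
  (forall K, exists k, K <= k /\ m k < n k) /\
  F (fun x => exists k, n k = x).

Definition I_wins_G1 (F : subset_w -> Prop) : Prop :=
  exists sigma : list nat -> nat,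
    forall n : nat -> nat,
      ~ II_wins_play_G1 F (fun k => sigma (hist n k)) n.

Definition II_wins_G1 (F : subset_w -> Prop) : Prop :=
  exists tau : list nat -> nat -> nat,
    forall m : nat -> nat,
      II_wins_play_G1 F m (fun k => tau (hist m k) (m k)).

(* Main.v *)
Require Import Defs.
From Stdlib Require Import List Arith Lia Classical ClassicalEpsilon.
Import ListNotations.


Lemma least_ex (P : nat -> Prop) : (exists n, P n) -> exists n, P n /\ forall m, m < n -> ~ P m.
Proof.
  intros [n Hn]. revert Hn. induction n as [n IH] using lt_wf_ind.
  intros Hn. destruct (classic (exists m, m < n /\ P m)) as [[m [Hm1 Hm2]]|H].
  - apply (IH m Hm1 Hm2).
  - exists n. split; auto. intros m Hm HP. apply H. eauto.
Qed.

Definition bdec (P : Prop) : bool := if excluded_middle_informative P then true else false.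
Lemma bdec_true P : bdec P = true <-> P.
Proof. unfold bdec. destruct (excluded_middle_informative P); split; intros; auto; try discriminate; contradiction. Qed.

Definition umax (l : list nat) := fold_right max 0 l.
Lemma umax_ge x l : In x l -> x <= umax l.
Proof. induction l; simpl; [tauto|]. intros [H|H]; subst; try lia. specialize (IHl H). lia. Qed.

Lemma hist_length {A} (x : nat -> A) k : length (hist x k) = k.
Proof. unfold hist. rewrite length_map, length_seq. auto. Qed.

Lemma in_hist {A} (x : nat -> A) k a : In a (hist x k) <-> exists j, j < k /\ x j = a.
Proof. unfold hist. rewrite in_map_iff. split.
  - intros [j [H1 H2]]. apply in_seq in H2. exists j. split; [lia|auto].
  - intros [j [H1 H2]]. exists j. split; auto. apply in_seq. lia. Qed.

Lemma cyl_app s t X : cyl (s ++ t) X -> cyl s X.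
Proof. unfold cyl. intros H i Hi. rewrite length_app in H. rewrite <- (app_nth1 s t false Hi). apply H. lia. Qed.

Lemma filter_cof F X : is_filter F -> F X -> forall a, F (fun x => X x /\ a <= x).
Proof. intros [H1 [H2 H3]] HX a. apply H2; auto. apply H1. exists a. auto. Qed.

Lemma strict_mono (f : nat -> nat) : (forall k, f k < f (S k)) -> forall k k', k < k' -> f k < f k'.
Proof. intros H k k' Hk. induction Hk. apply H. specialize (H m). lia. Qed.
Lemma strict_mono_le (f : nat -> nat) : (forall k, f k < f (S k)) -> forall k k', k <= k' -> f k <= f k'.
Proof. intros H k k' Hk. destruct (Nat.eq_dec k k'). subst; lia. pose proof (strict_mono f H k k'). lia. Qed.
Lemma strict_ge (f : nat -> nat) : (forall k, f k < f (S k)) -> forall k, k <= f k.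
Proof. intros H k. induction k. lia. specialize (H k). lia. Qed.

Definition FB {A} (S : A -> Prop) := forall f : A -> nat, exists B, forall a, S a -> f a <= B.
Lemma FB_lt c : FB (fun x => x < c).
Proof. induction c; intros f. exists 0. intros; lia.
  destruct (IHc f) as [B HB]. exists (max B (f c)). intros a Ha.
  destruct (Nat.eq_dec a c). subst; lia. specialize (HB a ltac:(lia)). lia. Qed.
Lemma FB_list {A} (S : A -> Prop) : FB S -> forall L, FB (fun l : list A => length l <= L /\ Forall S l).
Proof. intros HS L. induction L; intros f.
  - exists (f []). intros [|a l] [H1 H2]; simpl in *; lia.
  - set (g := fun a => proj1_sig (constructive_indefinite_description _ (IHL (fun l => f (a :: l))))).
    destruct (HS g) as [B HB]. exists (max (f []) B). intros [|a l] [H1 H2]. lia.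
    inversion H2; subst. simpl in H1.
    assert (f (a :: l) <= g a). { unfold g. destruct (constructive_indefinite_description _ _) as [b Hb]. simpl. apply Hb. split; auto. lia. }
    specialize (HB a H3). lia. Qed.

Lemma bool_bounded u (f : list bool -> nat) : exists B, forall s, length s = u -> f s <= B.
Proof. revert f. induction u; intros f. exists (f []). intros [|]; simpl; intros; [lia|discriminate].
  destruct (IHu (fun s => f (true :: s))) as [B1 H1]. destruct (IHu (fun s => f (false :: s))) as [B2 H2].
  exists (max B1 B2). intros [|[|] s] Hs; simpl in Hs; try discriminate; injection Hs; intros.
  specialize (H1 s H). lia. specialize (H2 s H). lia. Qed.

Lemma nd_many (N : nat -> subset_w -> Prop) : (forall k, nowhere_dense (N k)) ->
  forall j s, exists t, forall X, cyl (s ++ t) X -> forall i, i <= j -> ~ N i X.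
Proof. intros nd j. induction j; intros s.
  - destruct (nd 0 s) as [t Ht]. exists t. intros X HX i Hi. assert (i = 0) by lia. subst. apply Ht; auto.
  - destruct (IHj s) as [t Ht]. destruct (nd (S j) (s ++ t)) as [t' Ht']. exists (t ++ t').
    intros X HX i Hi. rewrite app_assoc in HX. destruct (Nat.eq_dec i (S j)).
    + subst. apply Ht'; auto.
    + apply Ht. eapply cyl_app; eauto. lia. Qed.

Definition goodb (N : nat -> subset_w -> Prop) (j u b : nat) : Prop :=
  u <= b /\ forall s, length s = u -> exists t, length (s ++ t) = b /\ forall X, cyl (s ++ t) X -> forall i, i <= j -> ~ N i X.

Lemma good_ex N : (forall k, nowhere_dense (N k)) -> forall j u, exists b, goodb N j u b.
Proof. intros nd j u.
  set (tf := fun s => proj1_sig (constructive_indefinite_description _ (nd_many N nd j s))).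
  assert (Htf : forall s X, cyl (s ++ tf s) X -> forall i, i <= j -> ~ N i X).
  { intros s. unfold tf. destruct (constructive_indefinite_description _ _). simpl. auto. }
  destruct (bool_bounded u (fun s => length (tf s))) as [B HB].
  exists (u + B). split. lia. intros s Hs. exists (tf s ++ repeat false (B - length (tf s))).
  split. rewrite !length_app, repeat_length. specialize (HB s Hs). simpl in HB. lia.
  intros X HX. apply (Htf s). rewrite app_assoc in HX. eapply cyl_app; eauto. Qed.

Definition pat (Z : subset_w) (n : nat) : list bool := map (fun i => bdec (Z i)) (seq 0 n).
Lemma pat_length Z n : length (pat Z n) = n.
Proof. unfold pat. rewrite length_map, length_seq; auto. Qed.
Lemma nth_map_lt {A B} (f : A -> B) l d d' i : i < length l -> nth i (map f l) d = f (nth i l d').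
Proof. revert i; induction l; simpl; intros i Hi. lia. destruct i. auto. apply IHl. lia. Qed.
Lemma pat_nth Z n i : i < n -> nth i (pat Z n) false = bdec (Z i).
Proof. intros H. unfold pat. rewrite (nth_map_lt _ _ _ 0) by (rewrite length_seq; lia).
  rewrite seq_nth; auto. Qed.

Section Gap.
Variables (U : subset_w) (P : nat -> Prop) (u b : nat -> nat) (T : nat -> list bool -> list bool).
Fixpoint Ys (k : nat) : subset_w :=
  match k with
  | 0 => U
  | S k => fun x => Ys k x \/ (P k /\ u k <= x /\ x < b k /\
        nth x (pat (Ys k) (u k) ++ T k (pat (Ys k) (u k))) false = true)
  end.
Lemma Ys_mono k k' x : k <= k' -> Ys k x -> Ys k' x.
Proof. intros H. induction H; auto. intros. simpl. auto. Qed.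
End Gap.

Lemma gap (F : subset_w -> Prop) (N : nat -> subset_w -> Prop) :
  is_filter F -> (forall X, F X -> exists k, N k X) ->
  forall (U : subset_w) (P : nat -> Prop) (u b : nat -> nat),
  (forall k, goodb N k (u k) (b k)) ->
  (forall k, P k -> forall x, u k <= x -> x < b k -> ~ U x) ->
  (forall k k', P k -> P k' -> k < k' -> b k <= u k') ->
  (forall K, exists k, K <= k /\ P k) ->
  ~ F U.
Proof. intros HF Hcov U P u b Hg Hmiss Hord Hinf HU.
  assert (H' : forall k s, exists t, length s = u k -> length (s ++ t) = b k /\ forall X, cyl (s ++ t) X -> forall i, i <= k -> ~ N i X).
  { intros k s. destruct (Nat.eq_dec (length s) (u k)).
    - destruct (proj2 (Hg k) s e) as [t Ht]. exists t. auto.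
    - exists []. intros; contradiction. }
  set (T := fun k s => proj1_sig (constructive_indefinite_description _ (H' k s))).
  assert (HT : forall k s, length s = u k -> length (s ++ T k s) = b k /\ forall X, cyl (s ++ T k s) X -> forall i, i <= k -> ~ N i X).
  { intros k s. unfold T. destruct (constructive_indefinite_description _ _). simpl. auto. }
  set (Y := fun x => exists k, Ys U P u b T k x).
  assert (before : forall k x, P k -> forall k', k' <= k -> Ys U P u b T k' x -> U x \/ x < u k).
  { intros k x Pk k'. induction k'; simpl; auto. intros Hk [H|[Pk' [H1 [H2 _]]]]. apply IHk'; auto; lia.
    right. specialize (Hord k' k Pk' Pk ltac:(lia)). lia. }
  assert (after : forall k x, P k -> x < b k -> forall k', Ys U P u b T k' x -> Ys U P u b T (S k) x).
  { intros k x Pk Hx k'. induction k'; intros H.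
    - eapply Ys_mono; [|exact H]. lia.
    - destruct (le_lt_dec (S k') (S k)). eapply Ys_mono; eauto.
      destruct H as [H|[Pk' [H1 [H2 _]]]]. auto. specialize (Hord k k' Pk Pk' ltac:(lia)). lia. }
  assert (FY : F Y). { destruct HF as [_ [_ Hup]]. apply (Hup U); auto. intros x Hx. exists 0. exact Hx. }
  destruct (Hcov Y FY) as [j Hj]. destruct (Hinf j) as [k [Hjk Pk]].
  set (s := pat (Ys U P u b T k) (u k)).
  destruct (HT k s (pat_length _ _)) as [Hlen Hav].
  apply (Hav Y) with j; auto.
  intros i Hi. rewrite Hlen in Hi. destruct (Hg k) as [Hub _].
  destruct (lt_dec i (u k)).
  - rewrite app_nth1 by (unfold s; rewrite pat_length; lia). unfold s. rewrite pat_nth by lia.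
    rewrite bdec_true. split.
    + intros [k' Hk']. apply (after k i Pk ltac:(lia)) in Hk'. destruct Hk' as [H|[_ [H _]]]. auto. lia.
    + intros H. exists k. auto.
  - split.
    + intros [k' Hk']. apply (after k i Pk Hi) in Hk'. destruct Hk' as [H|[_ [_ [_ H]]]]; auto.
      destruct (before k i Pk k (le_n _) H). exfalso; apply (Hmiss k Pk i); auto; lia. lia.
    + intros H. exists (S k). simpl. right. repeat split; auto. lia.
Qed.

Section MeagerI.
Variable F : subset_w -> Prop.
Hypothesis HF : is_filter F.
Variable N : nat -> subset_w -> Prop.
Hypothesis nd : forall k, nowhere_dense (N k).
Hypothesis cov : forall X, F X -> exists k, N k X.

Definition Bf (j u : nat) : nat := proj1_sig (constructive_indefinite_description _ (good_ex N nd j u)).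
Lemma Bf_spec j u : goodb N j u (Bf j u).
Proof. unfold Bf. destruct (constructive_indefinite_description _ _); auto. Qed.
Lemma Bf_ge j u : u <= Bf j u.
Proof. apply (Bf_spec j u). Qed.

Lemma meager_IG : I_wins_G F.
Proof.
  exists (fun h => fun n => Bf (length h) (S (umax (concat h))) <= n). split.
  { intros h. exists (Bf (length h) (S (umax (concat h)))). auto. }
  intros s Hs. set (uu := fun k => S (umax (concat (hist s k)))). set (bb := fun k => Bf k (uu k)).
  assert (Hleg : forall k, s k <> [] /\ forall x, In x (s k) -> bb k <= x).
  { intros k. destruct (Hs k) as [H1 H2]. rewrite hist_length in H2. split; auto. }
  assert (Hlt : forall k k' x, k' < k -> In x (s k') -> x < uu k).
  { intros k k' x Hk Hx. unfold uu. assert (In x (concat (hist s k))).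
    { apply in_concat. exists (s k'). split; auto. apply in_hist. eauto. }
    apply umax_ge in H. lia. }
  assert (Hord : forall k k', k < k' -> bb k <= uu k').
  { intros k k' Hk. destruct (Hleg k) as [Hne Hin]. destruct (s k) as [|y l] eqn:E in Hne. contradiction.
    assert (In y (s k)) by (rewrite E; left; auto). specialize (Hin y H). specialize (Hlt k' k y Hk H). lia. }
  assert (Hbmono : forall k k', k <= k' -> bb k <= bb k').
  { intros k k' H. induction H. lia. specialize (Hord m (S m) ltac:(lia)). pose proof (Bf_ge (S m) (uu (S m))). unfold bb in *. lia. }
  apply (gap F N HF cov (union_of s) (fun _ => True) uu bb).
  - intros k. apply Bf_spec.
  - intros k _ x H1 H2 [k' Hk']. destruct (lt_dec k' k).
    + specialize (Hlt k k' x l Hk'). lia.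
    + specialize (Hbmono k k' ltac:(lia)). pose proof (proj2 (Hleg k') x Hk'). lia.
  - intros k k' _ _ H. auto.
  - intros K. exists K. auto.
Qed.

Lemma meager_IG1 : I_wins_G1 F.
Proof.
  exists (fun h => Bf (length h) (S (umax h))). intros n [Hinc [Hinf Hrange]].
  set (uu := fun k => S (umax (hist n k))).
  set (m := fun k => Bf (length (hist n k)) (S (umax (hist n k)))) in *.
  assert (Hlt : forall k k', k' < k -> n k' < uu k).
  { intros k k' Hk. unfold uu. assert (In (n k') (hist n k)) by (apply in_hist; eauto). apply umax_ge in H. lia. }
  apply (gap F N HF cov (fun x => exists k, n k = x) (fun k => m k < n k) uu m).
  - intros k. unfold m. rewrite hist_length. apply Bf_spec.
  - intros k Pk x H1 H2 [k' Hk']. subst x. destruct (lt_dec k' k).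
    + specialize (Hlt k k' l). lia.
    + pose proof (strict_mono_le n Hinc k k' ltac:(lia)). lia.
  - intros k k' Pk _ H. specialize (Hlt k' k H). lia.
  - auto.
  - auto.
Qed.
End MeagerI.

Lemma intervals_meager (F : subset_w -> Prop) (i : nat -> nat) :
  (forall n, i n < i (S n)) ->
  (forall X, F X -> exists K, forall n, K <= n -> exists x, i n <= x < i (S n) /\ X x) -> meager F.
Proof. intros Hi H.
  exists (fun k X => forall n, k <= n -> exists x, i n <= x < i (S n) /\ X x). split.
  - intros k s. set (n := max k (length s)). pose proof (strict_ge i Hi n).
    exists (repeat false (i (S n) - length s)). intros X HX HN.
    destruct (HN n ltac:(lia)) as [x [[Hx1 Hx2] HXx]]. specialize (Hi n).
    assert (Hl : x < length (s ++ repeat false (i (S n) - length s))) by (rewrite length_app, repeat_length; lia).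
    apply (HX x Hl) in HXx. rewrite app_nth2 in HXx by lia. rewrite nth_repeat in HXx. discriminate.
  - auto.
Qed.

Lemma enum_ex (X : subset_w) : infinite_set X ->
  exists e : nat -> nat, (forall k, e k < e (S k)) /\ (forall k, X (e k)) /\ (forall x, X x -> exists k, e k = x).
Proof. intros Hinf.
  assert (Hl : forall c, exists y, (c <= y /\ X y) /\ forall z, z < y -> ~ (c <= z /\ X z)).
  { intros c. apply least_ex. destruct (Hinf c) as [y Hy]. eauto. }
  set (lf := fun c => proj1_sig (constructive_indefinite_description _ (Hl c))).
  assert (Hlf : forall c, (c <= lf c /\ X (lf c)) /\ forall z, z < lf c -> ~ (c <= z /\ X z)).
  { intros c. unfold lf. destruct (constructive_indefinite_description _ _). auto. }
  set (e := nat_rect (fun _ => nat) (lf 0) (fun _ ek => lf (S ek))).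
  assert (E0 : e 0 = lf 0) by reflexivity. assert (ES : forall k, e (S k) = lf (S (e k))) by reflexivity.
  exists e. split; [|split].
  - intros k. rewrite ES. destruct (Hlf (S (e k))) as [[H _] _]. lia.
  - intros [|k]. rewrite E0. apply Hlf. rewrite ES. apply Hlf.
  - intros x Hx. assert (Hinc : forall k, e k < e (S k)). { intros k. rewrite ES. destruct (Hlf (S (e k))) as [[H _] _]. lia. }
    destruct (least_ex (fun k => x <= e k)) as [k [Hk1 Hk2]]. exists x. apply (strict_ge e Hinc).
    exists k. destruct k.
    + rewrite E0 in *. destruct (Hlf 0) as [_ H]. destruct (lt_dec x (lf 0)). exfalso; apply (H x); auto; split; [lia|auto]. lia.
    + specialize (Hk2 k ltac:(lia)). rewrite ES in *. destruct (Hlf (S (e k))) as [_ H].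
      destruct (lt_dec x (lf (S (e k)))). exfalso; apply (H x); auto; split; [lia|auto]. lia.
Qed.

Definition S1 (c : nat) : list nat -> Prop := fun l => length l <= c /\ Forall (fun x => x < c) l.
Definition S2 (c : nat) : list (list nat) -> Prop := fun p => length p <= c /\ Forall (S1 c) p.
Lemma FB_S1 c : FB (S1 c). Proof. apply FB_list. apply FB_lt. Qed.
Lemma FB_S2 c : FB (S2 c). Proof. apply FB_list. apply FB_S1. Qed.

Lemma missed_inf (F : subset_w -> Prop) (i : nat -> nat) X :
  ~ (exists K, forall n, K <= n -> exists x, i n <= x < i (S n) /\ X x) ->
  forall K, exists n, K <= n /\ forall x, i n <= x -> x < i (S n) -> ~ X x.
Proof. intros H K. apply NNPP. intros H1. apply H. exists K. intros n Hn. apply NNPP. intros H2.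
  apply H1. exists n. split; auto. intros x Hx1 Hx2 Hx. apply H2. exists x. auto. Qed.

Lemma least_idx (e : nat -> nat) : (forall k, e k < e (S k)) -> forall T,
  exists k, T <= e k /\ forall j, j < k -> e j < T.
Proof. intros He T. destruct (least_ex (fun k => T <= e k)) as [k [H1 H2]].
  exists T. apply strict_ge; auto. exists k. split; auto. intros j Hj. specialize (H2 j Hj). lia. Qed.

Lemma IG1_meager F : proper_filter F -> I_wins_G1 F -> meager F.
Proof. intros [HF Hprop] [sigma Hsig].
  set (Bd := fun c => proj1_sig (constructive_indefinite_description _ (FB_S1 c sigma))).
  assert (HBd : forall c l, S1 c l -> sigma l <= Bd c).
  { intros c. unfold Bd. destruct (constructive_indefinite_description _ _). auto. }
  set (i := nat_rect (fun _ => nat) 0 (fun _ a => S (max a (Bd a)))).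
  assert (iS : forall n, i (S n) = S (max (i n) (Bd (i n)))) by reflexivity.
  assert (Hi : forall n, i n < i (S n)) by (intros n; rewrite iS; lia).
  apply (intervals_meager F i Hi). intros X HX. apply NNPP. intros Hno.
  pose proof (missed_inf F i X Hno) as Hmiss.
  destruct (enum_ex X (Hprop X HX)) as [e [Hinc [HXe Hsur]]].
  apply (Hsig e). split; [auto|split].
  - intros K. destruct (Hmiss (S (e K))) as [n [Hn Hmn]]. pose proof (strict_ge i Hi n).
    destruct (least_idx e Hinc (i n)) as [k [Hk1 Hk2]].
    assert (K < k). { destruct (le_lt_dec k K); auto. pose proof (strict_mono_le e Hinc k K l). lia. }
    exists k. split. lia.
    assert (S1 (i n) (hist e k)).
    { split. rewrite hist_length. specialize (Hk2 (k - 1) ltac:(lia)). pose proof (strict_ge e Hinc (k-1)). lia.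
      apply Forall_forall. intros x Hx. apply in_hist in Hx. destruct Hx as [j [Hj1 Hj2]]. subst. auto. }
    apply HBd in H1. rewrite iS in Hmn.
    assert (~ (e k < S (max (i n) (Bd (i n))))). { intros Hc. apply (Hmn (e k)); auto. }
    lia.
  - destruct HF as [_ [_ Hup]]. apply (Hup X); auto.
Qed.

Lemma IG_meager F : proper_filter F -> I_wins_G F -> meager F.
Proof. intros [HF Hprop] [sigma [Hcof Hsig]].
  set (Nf := fun h => proj1_sig (constructive_indefinite_description _ (Hcof h))).
  assert (HNf : forall h n, Nf h <= n -> sigma h n).
  { intros h. unfold Nf. destruct (constructive_indefinite_description _ _). auto. }
  set (Bd := fun c => proj1_sig (constructive_indefinite_description _ (FB_S2 c Nf))).
  assert (HBd : forall c p, S2 c p -> Nf p <= Bd c).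
  { intros c. unfold Bd. destruct (constructive_indefinite_description _ _). auto. }
  set (i := nat_rect (fun _ => nat) 0 (fun _ a => S (max a (Bd a)))).
  assert (iS : forall n, i (S n) = S (max (i n) (Bd (i n)))) by reflexivity.
  assert (Hi : forall n, i n < i (S n)) by (intros n; rewrite iS; lia).
  apply (intervals_meager F i Hi). intros X HX. apply NNPP. intros Hno.
  pose proof (missed_inf F i X Hno) as Hmiss.
  destruct (enum_ex X (Hprop X HX)) as [e [Hinc [HXe Hsur]]].
  set (lk := fun T => proj1_sig (constructive_indefinite_description _ (least_idx e Hinc T))).
  assert (Hlk : forall T, T <= e (lk T) /\ forall j, j < lk T -> e j < T).
  { intros T. unfold lk. destruct (constructive_indefinite_description _ _). auto. }
  assert (Hnn : forall c, exists n, (S (e c) <= n) /\ forall x, i n <= x -> x < i (S n) -> ~ X x) by (intros; apply Hmiss).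
  set (nn := fun c => proj1_sig (constructive_indefinite_description _ (Hnn c))).
  assert (Hnns : forall c, e c < i (nn c) /\ forall x, i (nn c) <= x -> x < i (S (nn c)) -> ~ X x).
  { intros c. unfold nn. destruct (constructive_indefinite_description _ _) as [n [H1 H2]]. simpl.
    pose proof (strict_ge i Hi n). split; auto. lia. }
  set (c := nat_rect (fun _ => nat) (lk (i (nn 0))) (fun _ cj => lk (i (nn cj)))).
  set (nj := fun j => match j with 0 => nn 0 | S j' => nn (c j') end).
  assert (cE : forall j, c j = lk (i (nj j))) by (intros [|j]; reflexivity).
  assert (cS : forall j, c (S j) = lk (i (nn (c j)))) by reflexivity.
  assert (njmiss : forall j x, i (nj j) <= x -> x < i (S (nj j)) -> ~ X x) by (intros [|j]; apply Hnns).
  assert (Hc : forall j, c j < c (S j)).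
  { intros j. rewrite cS. destruct (Hnns (c j)) as [H1 _]. set (T := i (nn (c j))) in *.
    destruct (le_lt_dec (lk T) (c j)); auto. destruct (Hlk T) as [H2 _]. pose proof (strict_mono_le e Hinc _ _ l). lia. }
  set (s := fun j => map e (seq (c j) (c (S j) - c j))).
  (* elements of hist s j are below i (nj j) *)
  assert (Hcle : forall j, c j <= i (nj j)).
  { intros j. rewrite cE. destruct (lk (i (nj j))) eqn:E. lia. destruct (Hlk (i (nj j))) as [_ H]. rewrite E in H.
    specialize (H n ltac:(lia)). pose proof (strict_ge e Hinc n). lia. }
  apply (Hsig s).
  - intros j. split.
    + unfold s. destruct (c (S j) - c j) eqn:E. specialize (Hc j). lia. simpl. discriminate.
    + intros x Hx. apply HNf. unfold s in Hx. apply in_map_iff in Hx. destruct Hx as [k [Hk1 Hk2]]. apply in_seq in Hk2.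
      subst x. assert (S2 (i (nj j)) (hist s j)).
      { split. rewrite hist_length. pose proof (strict_ge c Hc j). specialize (Hcle j). lia.
        apply Forall_forall. intros b Hb. apply in_hist in Hb. destruct Hb as [j' [Hj' Hb]]. subst b.
        pose proof (strict_mono_le c Hc (S j') j ltac:(lia)). split.
        - unfold s. rewrite length_map, length_seq. specialize (Hcle j). lia.
        - apply Forall_forall. intros y Hy. unfold s in Hy. apply in_map_iff in Hy. destruct Hy as [k' [Hk'1 Hk'2]].
          apply in_seq in Hk'2. subst y. destruct (Hlk (i (nj j))) as [_ H']. rewrite <- cE in H'. apply H'. lia. }
      apply HBd in H.
      assert (e (c j) <= e k) by (apply strict_mono_le; auto; lia).
      destruct (Hlk (i (nj j))) as [H' _]. rewrite <- cE in H'.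
      assert (Hn : ~ (e k < i (S (nj j)))). { intros Hc'. apply (njmiss j (e k)); auto. lia. }
      rewrite iS in Hn. lia.
  - destruct HF as [H1 [H2 Hup]]. apply (Hup (fun x => X x /\ e (c 0) <= x)).
    apply filter_cof; auto. repeat split; auto.
    intros x [Hx1 Hx2]. destruct (Hsur x Hx1) as [k Hk]. subst x.
    assert (c 0 <= k). { destruct (le_lt_dec (c 0) k); auto. pose proof (strict_mono e Hinc _ _ l). lia. }
    destruct (least_ex (fun j => k < c (S j))) as [j [Hj1 Hj2]].
    { exists k. pose proof (strict_ge c Hc (S k)). lia. }
    exists j. unfold s. apply in_map_iff. exists k. split; auto. apply in_seq.
    assert (c j <= k). { destruct j. auto. specialize (Hj2 j ltac:(lia)). lia. }
    lia.
Qed.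

Definition setT (t : nat) : subset_w := fun n => t <= n.

Lemma hist_S {A} (x : nat -> A) k : hist x (S k) = hist x k ++ [x k].
Proof. unfold hist. rewrite seq_S, map_app. reflexivity. Qed.

Lemma umax_le l M : (forall x, In x l -> x <= M) -> umax l <= M.
Proof. induction l; simpl; intros H. lia. pose proof (H a (or_introl eq_refl)). assert (umax l <= M) by (apply IHl; auto). lia. Qed.

Lemma notIIG F : proper_filter F -> ~ II_wins_G F.
Proof. intros [HF Hprop] [tau [Hleg Hw]].
  set (rG := fun (h : list nat) t => tau (map setT h) (setT t)).
  set (step := fun (st : list nat * list nat * nat) =>
     let '(a, b, M) := st in
     let ta := S M in let M1 := max M (umax (rG a ta)) in
     let tb := S M1 in let M2 := max M1 (umax (rG b tb)) in
     (a ++ [ta], b ++ [tb], M2)).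
  set (st := nat_rect (fun _ => (list nat * list nat * nat)%type) ([], [], 0) (fun _ s => step s)).
  set (A := fun r => fst (fst (st r))). set (B := fun r => snd (fst (st r))). set (M := fun r => snd (st r)).
  set (tA := fun r => S (M r)). set (M1 := fun r => max (M r) (umax (rG (A r) (tA r)))).
  set (tB := fun r => S (M1 r)).
  assert (EA : forall r, A (S r) = A r ++ [tA r]).
  { intros r. unfold A, tA, M. simpl. destruct (st r) as [[a b] m]. reflexivity. }
  assert (EB : forall r, B (S r) = B r ++ [tB r]).
  { intros r. unfold B, tB, M1, tA, A, M. simpl. destruct (st r) as [[a b] m]. reflexivity. }
  assert (EM : forall r, M (S r) = max (M1 r) (umax (rG (B r) (tB r)))).
  { intros r. unfold B, tB, M1, tA, A, M. simpl. destruct (st r) as [[a b] m]. reflexivity. }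
  assert (HA : forall r, A r = hist tA r).
  { induction r. reflexivity. rewrite EA, hist_S, IHr. auto. }
  assert (HB : forall r, B r = hist tB r).
  { induction r. reflexivity. rewrite EB, hist_S, IHr. auto. }
  assert (Mmono : forall r r', r <= r' -> M r <= M r').
  { intros r r' H. induction H. lia. rewrite EM. unfold M1 in *. lia. }
  assert (UA : F (union_of (fun k => tau (hist (fun k => setT (tA k)) k) (setT (tA k))))).
  { apply (Hw (fun k => setT (tA k))). intros k. exists (tA k). auto. }
  assert (UB : F (union_of (fun k => tau (hist (fun k => setT (tB k)) k) (setT (tB k))))).
  { apply (Hw (fun k => setT (tB k))). intros k. exists (tB k). auto. }
  destruct HF as [H1 [H2 H3]]. specialize (Hprop _ (H2 _ _ UA UB) 0).
  destruct Hprop as [x [_ [[k Hk] [j Hj]]]].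
  assert (hA : hist (fun k => setT (tA k)) k = map setT (A k)) by (rewrite HA; unfold hist; rewrite map_map; auto).
  assert (hB : hist (fun k => setT (tB k)) j = map setT (B j)) by (rewrite HB; unfold hist; rewrite map_map; auto).
  rewrite hA in Hk. rewrite hB in Hj. fold (rG (A k) (tA k)) in Hk. fold (rG (B j) (tB j)) in Hj.
  assert (lo1 : tA k <= x). { destruct (Hleg (map setT (A k)) (setT (tA k)) ltac:(exists (tA k); auto)) as [_ H]. apply H. auto. }
  assert (lo2 : tB j <= x). { destruct (Hleg (map setT (B j)) (setT (tB j)) ltac:(exists (tB j); auto)) as [_ H]. apply H. auto. }
  assert (hi1 : x <= M1 k) by (apply umax_ge in Hk; unfold M1; lia).
  assert (hi2 : x <= M (S j)) by (apply umax_ge in Hj; rewrite EM; lia).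
  unfold tA, tB, M1 in *. destruct (le_lt_dec k j).
  - destruct (Nat.eq_dec k j). subst. lia.
    pose proof (Mmono (S k) j ltac:(lia)) as Hm. rewrite EM in Hm. unfold M1 in Hm. lia.
  - pose proof (Mmono (S j) k l). lia.
Qed.

Lemma chain_prefix (W : nat -> list nat) : (forall r, exists t, W (S r) = W r ++ t) ->
  forall r r', r <= r' -> exists t, W r' = W r ++ t.
Proof. intros H r r' Hr. induction Hr. exists []. rewrite app_nil_r; auto.
  destruct IHHr as [t Ht]. destruct (H m) as [t' Ht']. exists (t ++ t'). rewrite Ht', Ht, app_assoc. auto. Qed.

Lemma chain_len (W : nat -> list nat) : (forall r, exists t, W (S r) = W r ++ t) ->
  forall r r', r <= r' -> length (W r) <= length (W r').
Proof. intros H r r' Hr. destruct (chain_prefix W H r r' Hr) as [t Ht]. rewrite Ht, length_app. lia. Qed.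

Lemma chain_nth (W : nat -> list nat) : (forall r, exists t, W (S r) = W r ++ t) ->
  (forall r, r <= length (W r)) -> forall r k, k < length (W r) -> nth k (W r) 0 = nth k (W (S k)) 0.
Proof. intros H Hl r k Hk. destruct (le_lt_dec r (S k)).
  - destruct (chain_prefix W H r (S k) l) as [t Ht]. rewrite Ht, app_nth1; auto.
  - destruct (chain_prefix W H (S k) r ltac:(lia)) as [t Ht]. rewrite Ht, app_nth1; auto; specialize (Hl (S k)); lia. Qed.

Lemma nth_map_lt' {A B} (f : A -> B) l d d' i : i < length l -> nth i (map f l) d = f (nth i l d').
Proof. revert i; induction l; simpl; intros i Hi. lia. destruct i. auto. apply IHl. lia. Qed.

Lemma firstn_hist (l : list nat) (m : nat -> nat) k : k <= length l -> (forall i, i < k -> nth i l 0 = m i) -> firstn k l = hist m k.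
Proof. intros Hk H. apply nth_ext with 0 0. rewrite length_firstn, hist_length. lia.
  intros n Hn. rewrite length_firstn in Hn. rewrite nth_firstn. destruct (Nat.ltb_spec n k); [|lia].
  unfold hist. rewrite (nth_map_lt' m _ 0 0) by (rewrite length_seq; lia). rewrite seq_nth by lia. apply H. lia. Qed.

Fixpoint walk (bnd : list nat -> nat) (h : list nat) (j : nat) : list nat :=
  match j with 0 => h | S j => walk bnd h j ++ [bnd (walk bnd h j)] end.

Lemma walk_len bnd h j : length (walk bnd h j) = length h + j.
Proof. induction j; simpl. lia. rewrite length_app, IHj. simpl. lia. Qed.
Lemma walk_pre bnd h j : exists t, walk bnd h j = h ++ t.
Proof. induction j; simpl. exists []. rewrite app_nil_r; auto. destruct IHj as [t Ht]. rewrite Ht. exists (t ++ [bnd (h ++ t)]). rewrite app_assoc; auto. Qed.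

Lemma map_nth_seq (l : list nat) : map (fun k => nth k l 0) (seq 0 (length l)) = l.
Proof. apply nth_ext with 0 0. rewrite length_map, length_seq; auto.
  intros n Hn. rewrite length_map, length_seq in Hn. rewrite (nth_map_lt' _ _ _ 0) by (rewrite length_seq; lia).
  rewrite seq_nth; auto. Qed.

Lemma notIIG1 F : proper_filter F -> ~ II_wins_G1 F.
Proof. intros [HF Hprop] [tau Hw].
  set (U := fun h => forall B, exists x, B < tau h x).
  assert (Hb : forall h, exists B, ~ U h -> forall x, tau h x <= B).
  { intros h. destruct (classic (U h)). exists 0. tauto.
    apply not_all_ex_not in H. destruct H as [B HB]. exists B. intros _ x. destruct (le_lt_dec (tau h x) B); auto. exfalso. apply HB. eauto. }
  set (bnd := fun h => proj1_sig (constructive_indefinite_description _ (Hb h))).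
  assert (Hbnd : forall h, ~ U h -> forall x, tau h x <= bnd h).
  { intros h. unfold bnd. destruct (constructive_indefinite_description _ _). auto. }
  assert (Hj : forall h T, exists x, U h -> T < tau h x).
  { intros h T. destruct (classic (U h)). destruct (H T) as [x Hx]. eauto. exists 0; tauto. }
  set (jm := fun h T => proj1_sig (constructive_indefinite_description _ (Hj h T))).
  assert (Hjm : forall h T, U h -> T < tau h (jm h T)).
  { intros h T. unfold jm. destruct (constructive_indefinite_description _ _). auto. }
  assert (Hreach : forall h, exists j, U (walk bnd h j)).
  { intros h. apply NNPP. intros Hn.
    set (L := length h). set (mm := fun k => if k <? L then nth k h 0 else bnd (walk bnd h (k - L))).
    assert (mmE : forall j, mm (L + j) = bnd (walk bnd h j)).
    { intros j. unfold mm. destruct (Nat.ltb_spec (L + j) L). lia. f_equal. f_equal. lia. }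
    assert (Hwk : forall j, walk bnd h j = hist mm (L + j)).
    { induction j.
      - simpl. rewrite Nat.add_0_r. unfold hist. rewrite <- (map_nth_seq h) at 1. apply map_ext_in.
        intros a Ha. apply in_seq in Ha. unfold mm. destruct (Nat.ltb_spec a L). auto. unfold L in *. lia.
      - simpl. rewrite IHj. rewrite Nat.add_succ_r, hist_S. f_equal. f_equal. rewrite mmE, IHj. auto. }
    destruct (Hw mm) as [_ [Hinf _]]. destruct (Hinf L) as [k [Hk1 Hk2]].
    replace k with (L + (k - L)) in Hk2 by lia. rewrite <- Hwk, mmE in Hk2.
    assert (~ U (walk bnd h (k - L))) by (intros HU; apply Hn; eauto).
    specialize (Hbnd _ H (bnd (walk bnd h (k - L)))). lia. }
  set (reach := fun h => proj1_sig (constructive_indefinite_description _ (Hreach h))).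
  assert (Hrs : forall h, U (walk bnd h (reach h))).
  { intros h. unfold reach. destruct (constructive_indefinite_description _ _). auto. }
  set (phase := fun h T => walk bnd (h ++ [jm h T]) (reach (h ++ [jm h T]))).
  assert (phU : forall h T, U (phase h T)) by (intros; apply Hrs).
  assert (phP : forall h T, exists t, phase h T = h ++ [jm h T] ++ t).
  { intros h T. unfold phase. destruct (walk_pre bnd (h ++ [jm h T]) (reach (h ++ [jm h T]))) as [t Ht].
    rewrite Ht. exists t. rewrite app_assoc. auto. }
  set (Mx := fun h => umax (map (fun k => tau (firstn k h) (nth k h 0)) (seq 0 (length h)))).
  set (W0 := walk bnd [] (reach [])).
  set (st := nat_rect (fun _ => (list nat * list nat)%type) (W0, W0)
     (fun _ p => let a' := phase (fst p) (S (max (Mx (fst p)) (Mx (snd p)))) in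
                 (a', phase (snd p) (S (max (Mx a') (Mx (snd p))))))).
  set (A := fun r => fst (st r)). set (B := fun r => snd (st r)).
  assert (EA : forall r, A (S r) = phase (A r) (S (max (Mx (A r)) (Mx (B r))))) by reflexivity.
  assert (EB : forall r, B (S r) = phase (B r) (S (max (Mx (A (S r))) (Mx (B r))))) by reflexivity.
  assert (UA : forall r, U (A r)) by (intros [|r]; [apply Hrs|rewrite EA; apply phU]).
  assert (UB : forall r, U (B r)) by (intros [|r]; [apply Hrs|rewrite EB; apply phU]).
  assert (chA : forall r, exists t, A (S r) = A r ++ t).
  { intros r. rewrite EA. destruct (phP (A r) (S (max (Mx (A r)) (Mx (B r))))) as [t Ht]. rewrite Ht. eauto. }
  assert (chB : forall r, exists t, B (S r) = B r ++ t).
  { intros r. rewrite EB. destruct (phP (B r) (S (max (Mx (A (S r))) (Mx (B r))))) as [t Ht]. rewrite Ht. eauto. }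
  assert (lenA : forall r, length (A r) < length (A (S r))).
  { intros r. rewrite EA. destruct (phP (A r) (S (max (Mx (A r)) (Mx (B r))))) as [t Ht]. rewrite Ht, !length_app. simpl. lia. }
  assert (lenB : forall r, length (B r) < length (B (S r))).
  { intros r. rewrite EB. destruct (phP (B r) (S (max (Mx (A (S r))) (Mx (B r))))) as [t Ht]. rewrite Ht, !length_app. simpl. lia. }
  assert (lA : forall r, r <= length (A r)) by (intros r; induction r; [lia|specialize (lenA r); lia]).
  assert (lB : forall r, r <= length (B r)) by (intros r; induction r; [lia|specialize (lenB r); lia]).
  set (mA := fun k => nth k (A (S k)) 0). set (mB := fun k => nth k (B (S k)) 0).
  set (nA := fun k => tau (hist mA k) (mA k)). set (nB := fun k => tau (hist mB k) (mB k)).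
  assert (valA : forall r i, i < length (A r) -> tau (firstn i (A r)) (nth i (A r) 0) = nA i).
  { intros r i Hi. unfold nA. rewrite (firstn_hist _ mA) by (try lia; intros; apply (chain_nth A chA lA); lia).
    rewrite (chain_nth A chA lA); auto. }
  assert (valB : forall r i, i < length (B r) -> tau (firstn i (B r)) (nth i (B r) 0) = nB i).
  { intros r i Hi. unfold nB. rewrite (firstn_hist _ mB) by (try lia; intros; apply (chain_nth B chB lB); lia).
    rewrite (chain_nth B chB lB); auto. }
  assert (GA : forall r i, i < length (A r) -> nA i <= Mx (A r)).
  { intros r i Hi. rewrite <- (valA r i Hi). apply umax_ge. apply in_map_iff. exists i. split; auto. apply in_seq. lia. }
  assert (GB : forall r i, i < length (B r) -> nB i <= Mx (B r)).
  { intros r i Hi. rewrite <- (valB r i Hi). apply umax_ge. apply in_map_iff. exists i. split; auto. apply in_seq. lia. }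
  destruct (Hw mA) as [incA [_ RA]]. destruct (Hw mB) as [incB [_ RB]].
  fold nA in incA, RA. fold nB in incB, RB.
  assert (jump : forall (W : nat -> list nat) (n : nat -> nat) (h : list nat) T r,
     (forall r i, i < length (W r) -> tau (firstn i (W r)) (nth i (W r) 0) = n i) ->
     (forall k, n k < n (S k)) -> W r = h -> U h -> 
     forall i, length h <= i -> i < length (phase h T) -> (forall r' , W r' = phase h T -> T < n i)).
  { intros W n h T r0 Hval Hinc Eh HU i Hi1 Hi2 r' Er'.
    destruct (phP h T) as [t Ht]. 
    assert (T < n (length h)).
    { rewrite <- (Hval r' (length h)) by (rewrite Er', Ht, !length_app; simpl; lia).
      rewrite Er', Ht. rewrite firstn_app, firstn_all, Nat.sub_diag. simpl. rewrite app_nil_r.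
      rewrite app_nth2 by lia. rewrite Nat.sub_diag. simpl. apply Hjm; auto. }
    pose proof (strict_mono_le n Hinc (length h) i Hi1). lia. }
  assert (FA : forall r i, length (A r) <= i -> i < length (A (S r)) -> Mx (A r) < nA i /\ Mx (B r) < nA i).
  { intros r i H1 H2. rewrite EA in H2. pose proof (jump A nA (A r) _ r valA incA eq_refl (UA r) i H1 H2 (S r) (EA r)). lia. }
  assert (FB : forall r i, length (B r) <= i -> i < length (B (S r)) -> Mx (A (S r)) < nB i /\ Mx (B r) < nB i).
  { intros r i H1 H2. rewrite EB in H2. pose proof (jump B nB (B r) _ r valB incB eq_refl (UB r) i H1 H2 (S r) (EB r)). lia. }
  assert (idx : forall (W : nat -> list nat), (forall r, length (W r) < length (W (S r))) -> forall i, length (W 0) <= i ->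
      exists r, length (W r) <= i /\ i < length (W (S r))).
  { intros W HW i Hi. destruct (least_ex (fun r => i < length (W r))) as [r [Hr1 Hr2]].
    exists (S i). pose proof (strict_ge (fun r => length (W r)) HW (S i)). simpl in H. lia.
    destruct r. lia. exists r. split; auto. specialize (Hr2 r ltac:(lia)). lia. }
  destruct HF as [H1 [H2 H3]]. specialize (Hprop _ (H2 _ _ RA RB) (S (Mx (A 0)))).
  destruct Hprop as [x [Hx [[i Hi] [j Hjj]]]].
  cbv beta in Hi, Hjj. change (nA i = x) in Hi. change (nB j = x) in Hjj.
  assert (Hi0 : length (A 0) <= i). { destruct (le_lt_dec (length (A 0)) i); auto. specialize (GA 0 i l). lia. }
  assert (Hj0 : length (B 0) <= j). { destruct (le_lt_dec (length (B 0)) j); auto. specialize (GB 0 j l). change (B 0) with (A 0) in GB. lia. }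
  destruct (idx A lenA i Hi0) as [ra [Ha1 Ha2]]. destruct (idx B lenB j Hj0) as [rb [Hb1 Hb2]].
  specialize (FA ra i Ha1 Ha2). specialize (FB rb j Hb1 Hb2).
  destruct (le_lt_dec ra rb).
  - pose proof (chain_len A chA (S ra) (S rb) ltac:(lia)). specialize (GA (S rb) i ltac:(lia)). lia.
  - pose proof (chain_len B chB (S rb) ra ltac:(lia)). specialize (GB ra j ltac:(lia)). lia.
Qed.

Theorem theorem2p11 (F : subset_w -> Prop) :
  proper_filter F ->
  ((I_wins_G1 F <-> I_wins_G F) /\ (II_wins_G1 F <-> II_wins_G F)) /\
  ((I_wins_G1 F <-> meager F) /\ (I_wins_G F <-> meager F)) /\
  (~ II_wins_G1 F /\ ~ II_wins_G F).
Proof.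
  intros HP.
  assert (M1 : I_wins_G1 F <-> meager F).
  { split. apply IG1_meager; auto. intros [N [nd cov]]. apply (meager_IG1 F (proj1 HP) N nd cov). }
  assert (M2 : I_wins_G F <-> meager F).
  { split. apply IG_meager; auto. intros [N [nd cov]]. apply (meager_IG F (proj1 HP) N nd cov). }
  pose proof (notIIG1 F HP). pose proof (notIIG F HP).
  split; [split|split; [split|split]]; auto; try tauto.
Qed.
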